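(* Let $\bar A=\{A_i\}$ be a partition with $A_j\in(P_j,Q_j)$ for all $j$, and let $x\in(P_i,Q_i)$. Then it is impossible to have simultaneously $T_ix\in[A_{\rho(i)+1},Q_{\rho(i)+1})$ and $T_{i-1}x\in(P_{\theta(i-1)},A_{\theta(i-1)}]$.
   Context: Setting. Fix $g\ge 2$; indices are mod $8g-4$. Let $\mathcal F$ be the regular hyperbolic $(8g-4)$-gon in the unit disk centered at $0$ with all interior angles $\pi/2$, sides labeled $1,\dots,8g-4$ counterclockwise, side $i$ joining vertices $V_i$ and $V_{i+1}$. The complete geodesic extending side $i$ goes from $P_i$ (beyond $V_i$) to $Q_{i+1}$ (beyond $V_{i+1}$) on the unit circle; counterclockwise order $P_1,Q_1,P_2,Q_2,\dots,P_{8g-4},Q_{8g-4}$. $\sigma(i)=4g-i$ ($i$ odd), $\sigma(i)=2-i$ ($i$ even), $\rho(i)=\sigma(i)+1$, $\theta(i)=\sigma(i)-1$. $T_i$ is the Möbius transformation mapping side $i$ onto side $\sigma(i)$, with isometric circle the geodesic $P_iQ_{i+1}$, mapped onto the geodesic $Q_{\sigma(i)+1}P_{\sigma(i)}$, inside to outside. Arcs $[A,B)$, $(A,B]$, $(A,B)$ are counterclockwise from $A$ to $B$. *)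

(* Defs.v *)
From Stdlib Require Import Reals ZArith.
From Coquelicot Require Import Coquelicot.
Open Scope R_scope.

(* Number of sides N = 8g-4, as an integer and as a real. *)
Definition NZ (g : nat) : Z := (8 * Z.of_nat g - 4)%Z.
Definition Nr (g : nat) : R := IZR (NZ g).

(* Side pairing maps on indices (integers; everything below is
   (8g-4)-periodic in the index, so indices are effectively mod 8g-4). *)
Definition sigma (g : nat) (i : Z) : Z :=
  if Z.odd i then (4 * Z.of_nat g - i)%Z else (2 - i)%Z.
Definition rho (g : nat) (i : Z) : Z := (sigma g i + 1)%Z.
Definition theta (g : nat) (i : Z) : Z := (sigma g i - 1)%Z.

Definition cis (t : R) : C := (cos t, sin t).

(* Geometry of the regular (8g-4)-gon F with all angles pi/2 centered at 0.
   Convention (rotation normalization): vertex V_i is at argument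
   2*pi*(i-1)/N, so side i (from V_i to V_{i+1}) has its midpoint on the ray
   of argument phi i = 2*pi*(i - 1/2)/N.  The complete geodesic through side i
   is the circle orthogonal to the unit circle, symmetric about that ray,
   with endpoints at arguments phi i -/+ beta, where
   sin beta = sqrt 2 * sin (pi/N) (this is exactly the condition that the
   geodesics through consecutive sides meet at right angles). *)
Definition phi (g : nat) (i : Z) : R := 2 * PI / Nr g * (IZR i - 1/2).
Definition beta (g : nat) : R := asin (sqrt 2 * sin (PI / Nr g)).

(* Endpoints: geodesic of side i goes from P_i (beyond V_i) to
   Q_{i+1} (beyond V_{i+1}). *)
Definition P (g : nat) (i : Z) : C := cis (phi g i - beta g).
Definition Q (g : nat) (i : Z) : C := cis (phi g (i - 1) + beta g).

(* Let k = cos beta.  The hyperbolic translation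
   M z = (z - k)/(1 - k z) along the real diameter maps the geodesic with
   endpoints e^{-/+ i beta} (isometric circle centered on the positive real
   axis) onto the geodesic with endpoints e^{i(pi +/- beta)}, inside to
   outside, with e^{-i beta} |-> e^{i(pi+beta)}.  Conjugating by rotations,
   T_i z = e^{i(phi(sigma i) - pi)} * M (e^{-i phi i} z)
   is the Moebius transformation of the disk with isometric circle the
   geodesic P_i Q_{i+1}, mapped onto the geodesic Q_{sigma i+1} P_{sigma i}
   (P_i |-> Q_{sigma i + 1}, Q_{i+1} |-> P_{sigma i}), inside to outside;
   it maps side i onto side sigma i. *)
Definition Mtrans (k : R) (z : C) : C :=
  ((z - RtoC k) / (RtoC 1 - RtoC k * z))%C.
Definition T (g : nat) (i : Z) (z : C) : C :=
  (cis (phi g (sigma g i) - PI) *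
   Mtrans (cos (beta g)) (cis (- phi g i) * z))%C.

Definition arc_oo (A B z : C) : Prop :=
  exists s t, 0 < s < 2 * PI /\ B = (A * cis s)%C /\
              0 < t < s /\ z = (A * cis t)%C.
Definition arc_co (A B z : C) : Prop :=
  exists s t, 0 < s < 2 * PI /\ B = (A * cis s)%C /\
              0 <= t < s /\ z = (A * cis t)%C.
Definition arc_oc (A B z : C) : Prop :=
  exists s t, 0 < s < 2 * PI /\ B = (A * cis s)%C /\
              0 < t <= s /\ z = (A * cis t)%C.

(* Main.v *)
Require Import Defs.
From Stdlib Require Import Reals ZArith Lra Lia Psatz.
From Coquelicot Require Import Coquelicot.
Open Scope R_scope.

Lemma cis_add a b : cis (a + b) = (cis a * cis b)%C.
Proof. unfold cis, Cmult; simpl. rewrite cos_plus, sin_plus. f_equal; ring. Qed.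

Lemma cis_eq a b : a = b -> cis a = cis b.
Proof. intros ->; reflexivity. Qed.

Lemma cis_cancel a b w : (cis a * w)%C = cis b -> w = cis (b - a).
Proof.
  destruct w as [w1 w2]. unfold cis, Cmult; simpl. intros H. injection H as H1 H2.
  rewrite cos_minus, sin_minus. pose proof (sin2_cos2 a) as E. unfold Rsqr in E.
  rewrite <- H1, <- H2. f_equal.
  - replace w1 with (w1 * (sin a * sin a + cos a * cos a)) at 1 by (rewrite E; ring); ring.
  - replace w2 with (w2 * (sin a * sin a + cos a * cos a)) at 1 by (rewrite E; ring); ring.
Qed.

Lemma cis_inj p a b : 0 <= a < 2*PI -> 0 <= b < 2*PI -> cis (p + a) = cis (p + b) -> a = b.
Proof.
  intros Ha Hb H. unfold cis in H. injection H as H1 H2.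
  assert (Hc : cos (a - b) = 1).
  { replace (a - b) with ((p + a) - (p + b)) by ring. rewrite cos_minus, H1, H2.
    pose proof (sin2_cos2 (p+b)) as E. unfold Rsqr in E. lra. }
  assert (Hs : sin ((a - b)/2) = 0).
  { pose proof (cos_2a_sin ((a-b)/2)) as E. replace (2 * ((a-b)/2)) with (a-b) in E by field.
    rewrite Hc in E. nra. }
  destruct (sin_eq_0_0 _ Hs) as [z Hz].
  pose proof PI_RGT_0.
  assert (-1 < IZR z < 1).
  { split.
    - apply (Rmult_lt_reg_r PI); [lra|]. rewrite <- Hz. lra.
    - apply (Rmult_lt_reg_r PI); [lra|]. rewrite <- Hz. lra. }
  destruct H0 as [L U]. apply lt_IZR in L. apply lt_IZR in U.
  assert (z = 0%Z) by lia. subst. simpl in Hz. lra.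
Qed.

Lemma L_oo p s0 z : 0 < s0 < 2*PI -> arc_oo (cis p) (cis (p + s0)) z ->
  exists t, 0 < t < s0 /\ z = cis (p + t).
Proof.
  intros Hs0 [s [t [Hs [HB [Ht Hz]]]]].
  rewrite <- cis_add in HB. apply cis_inj in HB; try lra. subst.
  exists t. split; [lra|]. symmetry; apply cis_add.
Qed.

Lemma L_co p tA s0 z : 0 < tA < s0 -> s0 < 2*PI ->
  arc_co (cis (p + tA)) (cis (p + s0)) z ->
  exists t, tA <= t < s0 /\ z = cis (p + t).
Proof.
  intros H1 H2 [s [t [Hs [HB [Ht Hz]]]]].
  rewrite <- cis_add in HB.
  replace (p + s0) with ((p + tA) + (s0 - tA)) in HB by ring.
  apply cis_inj in HB; try lra. subst.
  exists (tA + t). split; [lra|]. rewrite <- cis_add. apply cis_eq; ring.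
Qed.

Lemma L_oc p tA z : 0 < tA < 2*PI ->
  arc_oc (cis p) (cis (p + tA)) z ->
  exists t, 0 < t <= tA /\ z = cis (p + t).
Proof.
  intros H1 [s [t [Hs [HB [Ht Hz]]]]].
  rewrite <- cis_add in HB. apply cis_inj in HB; try lra. subst.
  exists t. split; [lra|]. symmetry; apply cis_add.
Qed.

Lemma L_D k u : 0 <= k < 1 -> 0 < (1 - k * cos u)^2 + (k * sin u)^2.
Proof.
  intros Hk. pose proof (sin2_cos2 u) as E. unfold Rsqr in E.
  { destruct (Rlt_or_le 0 ((1 - k * cos u)^2 + (k * sin u)^2)) as [|Hle]; [assumption|].
    exfalso. pose proof (pow2_ge_0 (1 - k * cos u)). pose proof (pow2_ge_0 (k * sin u)).
    assert (A1 : (k * sin u)^2 = 0) by lra. assert (A2 : (1 - k * cos u)^2 = 0) by lra.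
    assert (B1 : k * sin u = 0) by nra. assert (B2 : 1 - k * cos u = 0) by nra.
    assert (KK : k * k = (k * cos u) * (k * cos u) + (k * sin u) * (k * sin u)).
    { transitivity (k * k * (sin u * sin u + cos u * cos u)); [rewrite E; ring| ring]. }
    rewrite B1 in KK. replace (k * cos u) with 1 in KK by lra. nra. }
Qed.

Lemma L_M k u psi : 0 <= k < 1 -> Mtrans k (cis u) = cis psi ->
  cos psi * ((1 - k * cos u)^2 + (k * sin u)^2) = (1 + k^2) * cos u - 2 * k /\
  sin psi * ((1 - k * cos u)^2 + (k * sin u)^2) = (1 - k^2) * sin u.
Proof.
  intros Hk H. unfold Mtrans, cis, Cdiv, Cminus, Cmult, Cinv, Copp, Cplus, RtoC in H. cbn [fst snd] in H.
  injection H as H1 H2.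
  pose proof (sin2_cos2 u) as E. unfold Rsqr in E.
  assert (HD : 0 < (1 - k * cos u)^2 + (k * sin u)^2) by (apply L_D; exact Hk).
  set (D := (1 - k * cos u)^2 + (k * sin u)^2) in *.
  match type of H1 with context [_ / ?b] => assert (Hb : b = D) by (unfold D; ring); rewrite Hb in H1, H2 end.
  assert (HD0 : D <> 0) by lra. clearbody D. assert (XD : /D * D = 1) by (apply Rinv_l; exact HD0).
  assert (Hc : cos psi * D = (cos u - k)*(1 - k * cos u) - sin u * (k * sin u)).
  { rewrite <- H1. unfold Rdiv. transitivity (((cos u - k)*(1 - k * cos u) - sin u * (k * sin u)) * (/D * D)); [ring| rewrite XD; ring]. }
  assert (Hs : sin psi * D = (cos u - k)*(k * sin u) + sin u * (1 - k * cos u)).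
  { rewrite <- H2. unfold Rdiv. transitivity (((cos u - k)*(k * sin u) + sin u * (1 - k * cos u)) * (/D * D)); [ring| rewrite XD; ring]. }
  rewrite Hc, Hs. split.
  - transitivity ((1 + k^2) * cos u - k * (sin u * sin u + cos u * cos u) - k); [ring | rewrite E; ring].
  - ring.
Qed.
Lemma poly1 (t : R) : 0 <= t <= 1/9 ->
  (1-3*t+t^2)*(4*((1-53/100*t)*(1-11/10*t)^3) - 14143/10000*(1-8*t+8*t^2)) >=
  ((1-t) + (1-t/2)^3)*((1-8*t+8*t^2)*(1-t) + 4*t*(1-t/2)*(1-2*t)*(14143/10000)).
Proof. intros. nra. Qed.

Lemma poly2 (t : R) : 0 <= t <= 1/9 -> 0 < 1-3*t+t^2.
Proof. intros. nra. Qed.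
Lemma poly3 (t : R) : 0 <= t <= 1/9 -> 4*((1-53/100*t)*(1-11/10*t)^3) - 14143/10000*(1 - 8*t + 8*t^2) >= 0.
Proof. intros. nra. Qed.

Lemma sq_le (c b : R) : 0 <= b -> 0 <= c -> c^2 <= b^2 -> c <= b.
Proof. intros. destruct (Rle_or_lt c b); [lra|]. exfalso.
  assert (b*b < c*c) by (apply Rmult_le_0_lt_compat; lra). nra. Qed.

Lemma key_ineq (s c k q : R) : 0 < s <= 1/3 -> 0 < c -> c^2 = 1 - s^2 -> 0 < k ->
  k^2 = 1 - 2*s^2 -> 0 < q -> q^2 = 2 ->
  let e := 1 - 8*s^2*c^2 in
  let sA := s*(4*c*k^3 - e*q) in
  let cA := e*k + 4*s^2*c*k^2*q in
  0 <= c^3*sA + s^3*cA <= k*sA.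
Proof.
  intros Hs Hc Hc2 Hk Hk2 Hq Hq2 e sA cA.
  assert (HeD : e = 1 - 8*s^2*c^2) by reflexivity.
  assert (HsD : sA = s*(4*c*k^3 - e*q)) by reflexivity.
  assert (HcD : cA = e*k + 4*s^2*c*k^2*q) by reflexivity.
  clearbody e sA cA.
  set (t := s^2) in *.
  assert (Hts : t = s^2) by reflexivity. clearbody t.
  assert (Ht : 0 < t <= 1/9) by (rewrite Hts; nra).
  assert (Hq1 : q <= 14143/10000) by (apply sq_le; nra).
  assert (Hq0 : 14142/10000 <= q) by (apply sq_le; nra).
  assert (Hc1 : c <= 1 - t/2) by (apply sq_le; nra).
  assert (Hc0 : 1 - 53/100*t <= c) by (apply sq_le; nra).
  assert (Hk1 : k <= 1 - t) by (apply sq_le; nra).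
  assert (Hk0 : 1 - 11/10*t <= k) by (apply sq_le; nra).
  assert (He0 : 0 <= e) by (rewrite HeD; nra).
  assert (He1 : e = 1 - 8*t + 8*t^2) by (rewrite HeD, Hts; nra).
  assert (Hck : c*k^3 >= (1-53/100*t)*(1-11/10*t)^3).
  { assert (0 <= 1 - 11/10*t) by lra.
    assert (k^3 >= (1-11/10*t)^3).
    { replace (k^3) with (k*k*k) by ring. replace ((1-11/10*t)^3) with ((1-11/10*t)*(1-11/10*t)*(1-11/10*t)) by ring.
      apply Rle_ge; apply Rmult_le_compat; [nra|lra|apply Rmult_le_compat; lra|lra]. }
    apply Rle_ge; apply Rmult_le_compat; [lra|apply pow_le; lra|lra|lra]. }
  assert (HX : 4*c*k^3 - e*q >= 4*((1-53/100*t)*(1-11/10*t)^3) - 14143/10000*e) by nra.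
  assert (Hk3 : k + c^3 <= (1-t) + (1-t/2)^3).
  { assert (c^3 <= (1-t/2)^3).
    { replace (c^3) with (c*c*c) by ring. replace ((1-t/2)^3) with ((1-t/2)*(1-t/2)*(1-t/2)) by ring.
      apply Rmult_le_compat; [nra|lra|apply Rmult_le_compat; lra|lra]. }
    lra. }
  assert (HcA : cA <= e*(1-t) + 4*t*(1-t/2)*(1-2*t)*(14143/10000)).
  { rewrite HcD, Hk2.
    assert (e*k <= e*(1-t)) by nra.
    assert (0 <= 1 - 2*t) by lra.
    assert (c*(1-2*t)*q <= (1-t/2)*(1-2*t)*(14143/10000)).
    { apply Rmult_le_compat; [nra|lra|apply Rmult_le_compat_r; lra|lra]. }
    assert (4*t*(c*(1-2*t)*q) <= 4*t*((1-t/2)*(1-2*t)*(14143/10000))) by (apply Rmult_le_compat_l; lra).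
    replace (4 * t * c * (1 - 2 * t) * q) with (4*t*(c*(1-2*t)*q)) by ring.
    replace (4 * t * (1 - t / 2) * (1 - 2 * t) * (14143 / 10000)) with (4*t*((1-t/2)*(1-2*t)*(14143/10000))) by ring.
    lra. }
  assert (HcA0 : 0 <= cA).
  { rewrite HcD. apply Rplus_le_le_0_compat. apply Rmult_le_pos; lra.
    repeat apply Rmult_le_pos; try lra; try (apply pow_le; lra). }
  assert (Hpos : 0 < 1-3*t+t^2) by (pose proof (poly2 t ltac:(lra)); lra).
  assert (HX0 : 0 <= 4*c*k^3 - e*q).
  { pose proof (poly3 t ltac:(lra)). rewrite <- He1 in H. lra. }
  assert (M : (1-3*t+t^2)*(4*c*k^3 - e*q) >= (k+c^3)*cA).
  { pose proof (poly1 t ltac:(lra)) as P. rewrite <- He1 in P.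
    assert ((1-3*t+t^2)*(4*c*k^3 - e*q) >= (1-3*t+t^2)*(4*((1-53/100*t)*(1-11/10*t)^3) - 14143/10000*e)).
    { apply Rle_ge, Rmult_le_compat_l; lra. }
    assert ((k+c^3)*cA <= ((1-t) + (1-t/2)^3)*(e*(1-t) + 4*t*(1-t/2)*(1-2*t)*(14143/10000))).
    { apply Rmult_le_compat; try lra. apply Rplus_le_le_0_compat; [lra| apply pow_le; lra]. }
    lra. }
  assert (Hsa0 : 0 <= sA) by (rewrite HsD; apply Rmult_le_pos; lra).
  assert (Hc3 : 0 <= c^3) by (apply pow_le; lra).
  assert (Hs3 : 0 <= s^3) by (apply pow_le; lra).
  split.
  - apply Rplus_le_le_0_compat; apply Rmult_le_pos; lra.
  - assert (Hkc : k^2 - c^6 = t*(1-3*t+t^2)).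
    { replace (c^6) with ((c^2)^3) by ring. rewrite Hc2, Hk2. ring. }
    assert (Hkc3 : 0 < k + c^3) by lra.
    assert (H1 : (k+c^3)*((k-c^3)*sA - s^3*cA) >= 0).
    { replace ((k+c^3)*((k-c^3)*sA - s^3*cA)) with ((k^2-c^6)*sA - (k+c^3)*s^3*cA) by ring.
      rewrite Hkc, HsD.
      replace (t * (1 - 3 * t + t ^ 2) * (s * (4 * c * k ^ 3 - e * q)) - (k + c ^ 3) * s ^ 3 * cA)
        with ((s*t) * ((1-3*t+t^2)*(4*c*k^3 - e*q) - (k+c^3)*cA)) by (rewrite Hts; ring).
      assert (0 <= s*t) by (apply Rmult_le_pos; lra).
      apply Rle_ge, Rmult_le_pos; lra. }
    assert ((k-c^3)*sA - s^3*cA >= 0).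
    { destruct (Rle_or_lt 0 ((k-c^3)*sA - s^3*cA)); [lra|].
      exfalso. assert ((k+c^3)*((k-c^3)*sA - s^3*cA) < 0).
      { replace 0 with ((k+c^3)*0) by ring. apply Rmult_lt_compat_l; lra. }
      lra. }
    lra.
Qed.

Lemma PQ_form g j :
  P g j = cis (Defs.phi g j - beta g) /\
  Q g j = cis ((Defs.phi g j - beta g) + (2 * beta g - 2 * PI / Nr g)).
Proof.
  split; [reflexivity|]. unfold Q. apply cis_eq. unfold Defs.phi. rewrite minus_IZR. ring.
Qed.

Lemma phi_add g j n : Defs.phi g (j + n) = Defs.phi g j + IZR n * (2 * PI / Nr g).
Proof. unfold Defs.phi. rewrite plus_IZR. ring. Qed.

Lemma phi_sub g j n : Defs.phi g (j - n) = Defs.phi g j - IZR n * (2 * PI / Nr g).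
Proof. unfold Defs.phi. rewrite minus_IZR. ring. Qed.

Theorem lemma3p5 (g : nat) (A : Z -> C) (i : Z) (x : C) :
  (2 <= g)%nat ->
  (forall j : Z, A (j + NZ g)%Z = A j) ->
  (forall j : Z, arc_oo (P g j) (Q g j) (A j)) ->
  arc_oo (P g i) (Q g i) x ->
  ~ (arc_co (A (rho g i + 1)%Z) (Q g (rho g i + 1)%Z) (T g i x) /\
     arc_oc (P g (theta g (i - 1))) (A (theta g (i - 1))) (T g (i - 1) x)).
Proof.
  intros Hg _ HA Hx [C1 C2].
  assert (HN : 12 <= Nr g) by (unfold Nr, NZ; apply IZR_le; lia).
  pose proof PI_RGT_0 as Hpi. pose proof PI_4 as Hpi4. pose proof PI2_3_2 as Hpi3.
  assert (HNz : Nr g <> 0) by lra.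
  set (d := 2 * PI / Nr g) in *.
  set (h := PI / Nr g) in *.
  assert (Hdh : d = 2 * h) by (unfold d, h; field; exact HNz).
  assert (Hh : 0 < h <= 1/3).
  { unfold h. split. apply Rdiv_lt_0_compat; lra.
    apply (Rmult_le_reg_r (Nr g)); [lra|]. unfold Rdiv. rewrite Rmult_assoc, Rinv_l by exact HNz. lra. }
  set (s := sin h).
  set (c := cos h).
  assert (Hs : 0 < s) by (apply sin_gt_0; lra).
  assert (Hs1 : s < h) by (apply sin_lt_x; lra).
  assert (Hc : 0 < c) by (apply cos_gt_0; lra).
  assert (Hc2 : c^2 = 1 - s^2) by (pose proof (sin2_cos2 h) as E; unfold Rsqr in E; fold s c in E; nra).
  set (q := sqrt 2).
  assert (Hq : 0 < q) by (apply Rlt_sqrt2_0).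
  assert (Hq2 : q^2 = 2) by (unfold q; simpl; rewrite Rmult_1_r; apply sqrt_sqrt; lra).
  assert (Hq3 : q <= 3/2) by (apply sq_le; nra).
  assert (Hqs : -1 <= q * s <= 1) by nra.
  set (b := beta g).
  assert (Hbd : b = asin (q * s)) by reflexivity.
  assert (Hsb : sin b = q * s) by (rewrite Hbd; apply sin_asin; exact Hqs).
  set (k := cos b).
  assert (Hk2 : k^2 = 1 - 2 * s^2).
  { unfold k. rewrite Hbd, cos_asin by exact Hqs. simpl. rewrite Rmult_1_r, sqrt_sqrt.
    - unfold Rsqr. nra.
    - unfold Rsqr. nra. }
  assert (Hk : 0 < k).
  { unfold k. rewrite Hbd, cos_asin by exact Hqs. apply sqrt_lt_R0. unfold Rsqr. nra. }
  assert (Hk1 : 0 <= k < 1) by (split; [lra| nra]).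
  pose proof (asin_bound (q * s)) as Hbb. rewrite <- Hbd in Hbb.
  assert (Hhb : h < b).
  { destruct (Rlt_or_le h b) as [|Hle]; [assumption|]. exfalso.
    assert (sin b <= sin h) by (apply sin_incr_1; lra). fold s in H. nra. }
  set (s0 := 2 * b - d).
  assert (Hs0 : 0 < s0 < PI) by (unfold s0; lra).
  assert (Hs0' : 0 < s0 < 2 * PI) by lra.
  assert (PQ : forall j, P g j = cis (Defs.phi g j - b) /\ Q g j = cis ((Defs.phi g j - b) + s0))
    by (intros j; exact (PQ_form g j)).
  assert (HAj : forall j, exists tA, 0 < tA < s0 /\ A j = cis ((Defs.phi g j - b) + tA)).
  { intros j. destruct (PQ j) as [HP HQ]. pose proof (HA j) as H. rewrite HP, HQ in H.
    apply L_oo in H; [|exact Hs0']. exact H. }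
  destruct (PQ i) as [HPi HQi]. rewrite HPi, HQi in Hx.
  apply L_oo in Hx; [|exact Hs0']. destruct Hx as [tx [Htx Hxe]].
  destruct (HAj (rho g i + 1)%Z) as [tA1 [HtA1 HA1]].
  destruct (PQ (rho g i + 1)%Z) as [_ HQ1].
  rewrite HA1, HQ1 in C1. apply L_co in C1; [|exact HtA1|lra].
  destruct C1 as [t1 [Ht1 HT1]].
  destruct (HAj (theta g (i - 1))%Z) as [tA2 [HtA2 HA2]].
  destruct (PQ (theta g (i - 1))%Z) as [HP2 _].
  rewrite HA2, HP2 in C2. apply L_oc in C2; [|lra].
  destruct C2 as [t2 [Ht2 HT2]].
  set (a := 2 * d - b).
  set (u := tx - b).
  assert (E1 : Defs.phi g (rho g i + 1) = Defs.phi g (Defs.sigma g i) + 2 * d).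
  { unfold rho. replace (Defs.sigma g i + 1 + 1)%Z with (Defs.sigma g i + 2)%Z by ring.
    rewrite phi_add. unfold d. ring. }
  assert (HT1' : (cis (Defs.phi g (Defs.sigma g i) - PI) * Mtrans k (cis u))%C = cis (Defs.phi g (rho g i + 1) - b + t1)).
  { rewrite <- HT1. unfold T. f_equal. f_equal. rewrite Hxe, <- cis_add. apply cis_eq. unfold u. ring. }
  apply cis_cancel in HT1'. apply L_M in HT1'; [|exact Hk1]. destruct HT1' as [M1c M1s].
  replace (Defs.phi g (rho g i + 1) - b + t1 - (Defs.phi g (Defs.sigma g i) - PI)) with ((a + t1) + PI) in M1c, M1s
    by (rewrite E1; unfold a; ring).
  rewrite neg_cos in M1c. rewrite neg_sin in M1s.
  set (D1 := (1 - k * cos u)^2 + (k * sin u)^2) in *.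
  assert (G1 : sin t1 * D1 = ((1 + k^2) * cos u - 2*k) * sin a - (1 - k^2) * sin u * cos a).
  { replace t1 with ((a + t1) - a) at 1 by ring. rewrite sin_minus.
    transitivity (cos a * (sin (a+t1) * D1) - sin a * (cos (a+t1) * D1)); [ring|].
    replace (sin (a+t1) * D1) with (-((1-k^2)*sin u)) by lra.
    replace (cos (a+t1) * D1) with (-((1 + k^2) * cos u - 2 * k)) by lra. ring. }
  assert (E2 : Defs.phi g (theta g (i - 1)) = Defs.phi g (Defs.sigma g (i - 1)) - d).
  { unfold theta. rewrite phi_sub. unfold d. ring. }
  assert (Ei : Defs.phi g (i - 1) = Defs.phi g i - d).
  { rewrite phi_sub. unfold d. ring. }
  assert (HT2' : (cis (Defs.phi g (Defs.sigma g (i - 1)) - PI) * Mtrans k (cis (d + u)))%C = cis (Defs.phi g (theta g (i - 1)) - b + t2)).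
  { rewrite <- HT2. unfold T. f_equal. f_equal. rewrite Hxe, <- cis_add. apply cis_eq. rewrite Ei. unfold u. ring. }
  apply cis_cancel in HT2'. apply L_M in HT2'; [|exact Hk1]. destruct HT2' as [M2c M2s].
  set (t2' := s0 - t2).
  replace (Defs.phi g (theta g (i - 1)) - b + t2 - (Defs.phi g (Defs.sigma g (i - 1)) - PI)) with (- (a + t2') + PI) in M2c, M2s
    by (rewrite E2; unfold a, t2', s0; ring).
  rewrite neg_cos, cos_neg in M2c. rewrite neg_sin, sin_neg in M2s.
  set (D2 := (1 - k * cos (d + u))^2 + (k * sin (d + u))^2) in *.
  assert (G2 : sin t2' * D2 = ((1 + k^2) * cos (d + u) - 2*k) * sin a + (1 - k^2) * sin (d + u) * cos a).
  { replace t2' with ((a + t2') - a) at 1 by ring. rewrite sin_minus.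
    transitivity (cos a * (sin (a+t2') * D2) - sin a * (cos (a+t2') * D2)); [ring|].
    replace (sin (a+t2') * D2) with ((1-k^2)*sin (d + u)) by lra.
    replace (cos (a+t2') * D2) with (-((1 + k^2) * cos (d + u) - 2 * k)) by lra. ring. }
  assert (P1 : 0 < sin t1 * D1).
  { apply Rmult_lt_0_compat. apply sin_gt_0; lra. unfold D1. apply L_D; exact Hk1. }
  assert (P2 : 0 < sin t2' * D2).
  { apply Rmult_lt_0_compat. apply sin_gt_0; unfold t2'; lra. unfold D2. apply L_D; exact Hk1. }
  assert (Hsa : sin a = s*(4*c*k^3 - (1 - 8*s^2*c^2)*q)).
  { unfold a. rewrite Hdh. rewrite sin_minus, cos_2a_sin, !sin_2a, cos_2a_sin. fold s c k. rewrite Hsb.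
    replace (k^3) with (k * k^2) by ring. rewrite Hk2. ring. }
  assert (Hca : cos a = (1 - 8*s^2*c^2)*k + 4*s^2*c*k^2*q).
  { unfold a. rewrite Hdh. rewrite cos_minus, cos_2a_sin, !sin_2a, cos_2a_sin. fold s c k. rewrite Hsb.
    rewrite Hk2. ring. }
  set (m := u + h).
  assert (Hu : u = m - h) by (unfold m; ring).
  assert (Hv : d + u = m + h) by (unfold m; rewrite Hdh; ring).
  rewrite Hu in G1. rewrite Hv in G2.
  rewrite cos_minus, sin_minus in G1. rewrite cos_plus, sin_plus in G2. fold s c in G1, G2.
  assert (Hsum : sin t1 * D1 + sin t2' * D2 = 4 * cos m * (c^3 * sin a + s^3 * cos a) - 4 * k * sin a).
  { rewrite G1, G2.
    replace (1 + k^2) with (2*c^2) by (rewrite Hk2, Hc2; ring).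
    replace (1 - k^2) with (2*s^2) by (rewrite Hk2; ring). ring. }
  pose proof (key_ineq s c k q ltac:(lra) Hc Hc2 Hk Hk2 Hq Hq2) as KI. cbv zeta in KI.
  rewrite <- Hsa, <- Hca in KI.
  pose proof (COS_bound m) as Hcm.
  assert (cos m * (c^3 * sin a + s^3 * cos a) <= c^3 * sin a + s^3 * cos a).
  { replace (c^3 * sin a + s^3 * cos a) with (1 * (c^3 * sin a + s^3 * cos a)) at 2 by ring.
    apply Rmult_le_compat_r; lra. }
  lra.
Qed.
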